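(* Let $\Omega$ be a finite nonempty set, let $T\ge 1$ be an integer, and let $g:\Omega^*\to\mathbb{R}$ be a sequence function. Let $O\in\operatorname{argmin}_{S\in\Omega^T} g(S)$ be an optimal sequence of length $T$. Assume that $g$ is postfix monotonically non-increasing and weakly supermodular with respect to $O$ with supermodularity ratio $\alpha(O)\ge 1$. Let $S^T$ be the greedy sequence of length $T$, defined by $S^0=\emptyset$ and $S^{t+1}=S^t\oplus(\omega_t)$ with $\omega_t\in\operatorname{argmin}_{\omega\in\Omega} g(S^t\oplus(\omega))$ for $t=0,\dots,T-1$. Setting $\phi_T(\alpha)=\left(1-\frac{1}{\alpha T}\right)^T$, we have $$g(S^T)\le \bigl(1-\phi_T(\alpha(O))\bigr)\,g(O)+\phi_T(\alpha(O))\,g(\emptyset).$$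
   Context: $\Omega^*$ denotes the set of all finite sequences (including the empty sequence $\emptyset$) with entries in $\Omega$, and $\Omega^n$ the sequences of length $n$. For $S=(S_1,\dots,S_n)$ and $S'=(S'_1,\dots,S'_m)$, the concatenation is $S\oplus S'=(S_1,\dots,S_n,S'_1,\dots,S'_m)$; for $\omega\in\Omega$, $S\oplus\omega$ means $S\oplus(\omega)$. A function $g:\Omega^*\to\mathbb{R}$ is prefix monotonically non-increasing if $g(S\oplus S')\le g(S)$ for all $S,S'\in\Omega^*$, and postfix monotonically non-increasing if $g(S'\oplus S)\le g(S)$ for all $S,S'\in\Omega^*$. A prefix monotonically non-increasing $g$ is weakly supermodular with respect to $S'\in\Omega^*$ with supermodularity ratio $\alpha(S')\ge 1$ if for every $S\in\Omega^*$, $$g(S)-g(S\oplus S')\le \alpha(S')\sum_{i=1}^{|S'|}\bigl(g(S)-g(S\oplus S'_i)\bigr).$$ *)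

(* Defs.v *)
(* Sequences over Omega are [seq Omega]; concatenation is [++],
   S (+) w is [rcons S w]. *)
From HB Require Import structures.
From mathcomp Require Import all_boot all_order all_algebra.
Set Implicit Arguments. Unset Strict Implicit. Unset Printing Implicit Defensive.
Import Order.TTheory GRing.Theory Num.Theory.
Local Open Scope ring_scope.

Section Defs.
Variables (R : realFieldType) (Omega : finType).

Definition prefix_mono (g : seq Omega -> R) : Prop :=
  forall S S' : seq Omega, g (S ++ S') <= g S.

Definition postfix_mono (g : seq Omega -> R) : Prop :=
  forall S S' : seq Omega, g (S' ++ S) <= g S.

Definition weakly_supermodular (g : seq Omega -> R) (S' : seq Omega) (alpha : R)
  : Prop :=
  [/\ prefix_mono g, 1 <= alpha &
    forall S : seq Omega,
      g S - g (S ++ S') <= alpha * \sum_(o <- S') (g S - g (rcons S o))].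

Definition optimal_seq (g : seq Omega -> R) (T : nat) (O : seq Omega) : Prop :=
  size O = T /\ forall S : seq Omega, size S = T -> g O <= g S.

(* ws = (omega_0,...,omega_{T-1}) is a greedy sequence of length T:
   S^t = take t ws and omega_t minimises g(S^t (+) omega). *)
Definition greedy_seq (g : seq Omega -> R) (T : nat) (ws : seq Omega) : Prop :=
  size ws = T /\
  forall (t : nat) (w0 : Omega), (t < T)%N ->
    forall w : Omega,
      g (rcons (take t ws) (nth w0 ws t)) <= g (rcons (take t ws) w).

End Defs.

Definition phi {R : realFieldType} (T : nat) (alpha : R) : R :=
  (1 - (alpha * T%:R)^-1) ^+ T.

(* Main.v *)
Require Import Defs.
From HB Require Import structures.
From mathcomp Require Import all_boot all_order all_algebra.
From mathcomp Require Import lra.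
Import Order.TTheory GRing.Theory Num.Theory.
Local Open Scope ring_scope.

Theorem theorem1 (R : realFieldType) (Omega : finType) (T : nat)
  (g : seq Omega -> R) (O : seq Omega) (alpha : R) (ST : seq Omega) :
  (0 < #|Omega|)%N ->
  (1 <= T)%N ->
  optimal_seq g T O ->
  postfix_mono g ->
  weakly_supermodular g O alpha ->
  greedy_seq g T ST ->
  g ST <= (1 - phi T alpha) * g O + phi T alpha * g [::].
Proof.
move=> _ hT [sO optO] post [_ ha ws] [sST gr].
have [w0 _] : exists w0 : Omega, true.
  case E: O => [|o O']; last by exists o.
  by move: hT; rewrite -sO E.
set k := alpha * T%:R.
have hk1 : 1 <= k.
  have : (1 : R) <= T%:R by rewrite ler1n.
  rewrite /k => h; have := ler_pM (ler01) (ler01) ha h; by rewrite mulr1.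
have hk0 : 0 < k by apply: lt_le_trans hk1.
set c := 1 - k^-1.
have hc : 0 <= c by rewrite /c subr_ge0 invf_le1.
pose G t := g (take t ST).
have step : forall t, (t < T)%N -> G t.+1 - g O <= c * (G t - g O).
  move=> t ht.
  have ht' : (t < size ST)%N by rewrite sST.
  have e : take t.+1 ST = rcons (take t ST) (nth w0 ST t) by apply: take_nth.
  have hsum : \sum_(o <- O) (G t - g (rcons (take t ST) o)) <= T%:R * (G t - G t.+1).
    rewrite -sO; elim: O {sO optO ws} => [|o O' IH]; first by rewrite big_nil mul0r.
    rewrite big_cons /= -addn1 natrD mulrDl mul1r addrC lerD //.
    rewrite /G e lerB //; exact: gr.
  have h1 := ws (take t ST).
  have h2 := post O (take t ST).
  have h3 : G t - g O <= k * (G t - G t.+1).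
    rewrite /k -mulrA; apply: le_trans (ler_wpM2l _ hsum).
      by rewrite /G; apply: le_trans h1; rewrite lerD2l lerN2.
    by apply: le_trans ha.
  have h4 : k^-1 * (G t - g O) <= G t - G t.+1.
    by rewrite -(ler_pM2l hk0) mulrA mulfV ?mul1r // gt_eqF.
  rewrite /c mulrBl mul1r; lra.
have ind : forall t, (t <= T)%N -> G t - g O <= c ^+ t * (G 0 - g O).
  elim=> [|t IH] ht; first by rewrite expr0 mul1r.
  apply: le_trans (step t ht) _.
  rewrite exprS -mulrA ler_wpM2l //; apply: IH; exact: ltnW.
have := ind T (leqnn T).
have eT : take T ST = ST by rewrite -sST take_size.
rewrite /G take0 eT /phi -/k -/c mulrBr => h.
rewrite mulrBl mul1r; lra.
Qed.
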